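(* Let $F:\mathbb T^d\to\mathbb R^d$ and $u_0:\mathbb T^d\to[0,1]$ be $C^\infty$, and let $u$ be the solution of $\partial_tu=\Delta u-2\nabla\cdot(u(1-u)F)$ with $u(0,\cdot)=u_0$. Assume there exists $\varepsilon_0>0$ such that $\varepsilon_0\le u_0(x)\le1-\varepsilon_0$ for all $x\in\mathbb T^d$. Then for any $T>0$ there exists $\varepsilon_1>0$, depending only on $T$, $F$ and $\varepsilon_0$, such that $\varepsilon_1\le u(t,x)\le1-\varepsilon_1$ for all $x\in\mathbb T^d$ and $t\in[0,T]$.
   Context: $\mathbb T^d=\mathbb R^d/\mathbb Z^d$. *)

(* Defs.v *)
From HB Require Import structures.
From mathcomp Require Import all_boot all_order all_algebra.
From mathcomp Require Import all_classical all_reals all_analysis.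
Set Implicit Arguments. Unset Strict Implicit. Unset Printing Implicit Defensive.
Import Order.TTheory GRing.Theory Num.Theory.
Import numFieldNormedType.Exports.
Local Open Scope classical_set_scope.
Local Open Scope ring_scope.

Fixpoint Ck {R : realType} {V W : normedModType R} (k : nat) (f : V -> W) : Prop :=
  match k with
  | 0 => continuous f
  | k'.+1 => (forall x, differentiable f x) /\
             (forall v : V, Ck k' (fun x => derive f x v))
  end.

Definition smooth {R : realType} {V W : normedModType R} (f : V -> W) : Prop :=
  forall k, Ck k f.

Definition e_ {R : realType} {d : nat} (i : 'I_d) : 'rV[R]_d := delta_mx 0 i.

(* Z^d-periodicity: f descends to the torus T^d = R^d / Z^d *)
Definition Zd_periodic {R : realType} {d : nat} {W : Type} (f : 'rV[R]_d -> W) : Prop :=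
  forall (x : 'rV[R]_d) (z : 'rV[int]_d), f (x + map_mx (fun n : int => n%:~R) z) = f x.

Definition laplacian {R : realType} {d : nat} (f : 'rV[R]_d -> R) (x : 'rV[R]_d) : R :=
  \sum_(i < d) derive (fun y => derive f y (e_ i)) x (e_ i).

Definition divergence {R : realType} {d : nat} (G : 'rV[R]_d -> 'rV[R]_d) (x : 'rV[R]_d) : R :=
  \sum_(i < d) derive (fun y => G y 0 i) x (e_ i).

Definition is_solution {R : realType} {d : nat} (F : 'rV[R]_d -> 'rV[R]_d)
    (u0 : 'rV[R]_d -> R) (u : R -> 'rV[R]_d -> R) : Prop :=
  [/\ forall t, 0 <= t -> Zd_periodic (u t),
      {within [set p : R * 'rV[R]_d | 0 <= p.1], continuous (fun p => u p.1 p.2)},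
      forall x, u 0 x = u0 x,
      forall t, 0 < t -> Ck 2 (u t) /\ forall x, derivable (fun s => u s x) t 1
    & forall t x, 0 < t ->
      derive1 (fun s => u s x) t =
        laplacian (u t) x
        - 2 * divergence (fun y => (u t y * (1 - u t y)) *: F y) x].

(* Main.v *)
Require Import Defs.
From HB Require Import structures.
From mathcomp Require Import all_boot all_order all_algebra.
From mathcomp Require Import all_classical all_reals all_analysis.
From mathcomp Require Import lra ring.
Import Order.TTheory GRing.Theory Num.Theory.
Import numFieldNormedType.Exports.
Local Open Scope classical_set_scope.
Local Open Scope ring_scope.

Section S.
Context {R : realType}.
Lemma restr_eq {V W : normedModType R} (f : V -> W) x v s :
  (fun h : R => h^-1 *: (((fun r : R => f (r *: v + x)) \o shift s) (h *: 1) - f (s *: v + x)))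
  = (fun h : R => h^-1 *: ((f \o shift (s *: v + x)) (h *: v) - f (s *: v + x))).
Proof.
apply/funext => h /=. by rewrite /shift /= [h *: 1]mulr1 scalerDl addrA.
Qed.

Lemma restr_derivable {V W : normedModType R} (f : V -> W) x v s :
  derivable (fun r : R => f (r *: v + x)) s 1 <-> derivable f (s *: v + x) v.
Proof. by rewrite /derivable restr_eq. Qed.

Lemma restr_derive {V W : normedModType R} (f : V -> W) x v s :
  derive (fun r : R => f (r *: v + x)) s 1 = derive f (s *: v + x) v.
Proof. by rewrite /derive restr_eq. Qed.

Lemma oneD_min (g : R -> R) :
  (forall s, derivable g s 1) -> derivable (fun s => derive g s 1) 0 1 ->
  (forall s, g 0 <= g s) ->
  derive g 0 1 = 0 /\ 0 <= derive (fun s => derive g s 1) 0 1.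
Proof.
move=> dg dh gmin.
have g0 : derive g 0 1 = 0.
  have H : is_derive (0:R) (1:R) g (0:R).
    apply: (@derive1_at_min R g (-1) 1 0 _ (fun t _ => dg t) _ (fun t _ => gmin t)).
    - lra.
    - by rewrite in_itv /=; apply/andP; split; lra.
  exact: derive_val.
split => //.
rewrite leNgt; apply/negP => hlt.
set h := fun s => derive g s 1.
have Hd : (fun r : R => r^-1 *: ((h \o shift 0) (r *: 1) - h 0)) @ 0^' --> derive h 0 1 by exact: dh.
have := cvgr_lt _ Hd _ hlt.
move=> [e /= e0 He].
have Hneg : forall r, 0 < r < e -> h r < 0.
  move=> r /andP [r0 re].
  have Hr : ball_ Num.norm 0 e r by rewrite /ball_ /= sub0r normrN gtr0_norm.
  have := He r Hr (lt0r_neq0 r0).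
  rewrite /= /h g0 subr0 addr0 [r%:A]mulr1 -/(h r).
  have ri : 0 < r^-1 by rewrite invr_gt0.
  by rewrite -[_ *: _]/(r^-1 * h r) pmulr_rlt0.
set b := e / 2.
have b0 : 0 < b by rewrite /b divr_gt0.
have cg : {within `[0, b], continuous g}.
  apply: continuous_subspaceT => x.
  exact/differentiable_continuous/derivable1_diffP.
have [c cab Hc] := @MVT R g h 0 b b0 (fun x _ => derivableP (dg x)) cg.
have : h c < 0.
  apply: Hneg; move: cab; rewrite in_itv /= => /andP [c0 cb]; rewrite c0 /=.
  rewrite /b in cb; lra.
have := gmin b; rewrite -subr_ge0 Hc subr0 => H1 H2.
have : h c * b < 0 by rewrite pmulr_llt0.
lra.
Qed.


Lemma oneD_max (g : R -> R) :
  (forall s, derivable g s 1) -> derivable (fun s => derive g s 1) 0 1 ->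
  (forall s, g s <= g 0) ->
  derive g 0 1 = 0 /\ derive (fun s => derive g s 1) 0 1 <= 0.
Proof.
move=> dg dh gmax.
have E : (fun s => derive (- g) s 1) = - (fun s => derive g s 1).
  by apply/funext => s; rewrite deriveN.
have := @oneD_min (- g) (fun s => derivableN (dg s)).
rewrite E => /(_ (derivableN dh)) [].
  by move=> s /=; rewrite lerN2.
rewrite deriveN // deriveN // => /eqP; rewrite oppr_eq0 => /eqP -> H; split => //.
by rewrite -oppr_ge0.
Qed.

Lemma restr_prep {V : normedModType R} (f : V -> R) x v :
  (forall y, differentiable f y) -> differentiable (fun y => derive f y v) x ->
  [/\ forall s, derivable (fun r : R => f (r *: v + x)) s 1,
      derivable (fun s => derive (fun r : R => f (r *: v + x)) s 1) 0 1,
      derive (fun r : R => f (r *: v + x)) 0 1 = derive f x v &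
      derive (fun s => derive (fun r : R => f (r *: v + x)) s 1) 0 1 = derive (fun y => derive f y v) x v].
Proof. (idtac).
move=> df ddf.
have E : (fun s => derive (fun r : R => f (r *: v + x)) s 1) = (fun r : R => (fun y => derive f y v) (r *: v + x)).
  by apply/funext => s; rewrite restr_derive.
split.
- by move=> s; apply/restr_derivable/diff_derivable.
- have H := restr_derivable (fun y => derive f y v) x v 0.
  rewrite scale0r add0r in H.
  rewrite E.
  apply/H.
  exact: diff_derivable ddf.
- have H := restr_derive f x v 0.
  rewrite scale0r add0r in H.
  exact: H.
- have H := restr_derive (fun y => derive f y v) x v 0.
  rewrite scale0r add0r in H.
  rewrite E; exact: H.
Qed.

Lemma spatial_min {V : normedModType R} (f : V -> R) x v :
  (forall y, differentiable f y) -> differentiable (fun y => derive f y v) x ->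
  (forall y, f x <= f y) ->
  derive f x v = 0 /\ 0 <= derive (fun y => derive f y v) x v.
Proof.
move=> df ddf fmin; have [h1 h2 h3 h4] := restr_prep f x v df ddf.
have hm : forall s : R, (fun r : R => f (r *: v + x)) 0 <= (fun r : R => f (r *: v + x)) s.
  by move=> s /=; rewrite scale0r add0r; exact: fmin.
have := oneD_min (fun r : R => f (r *: v + x)) h1 h2 hm.
by rewrite h3 h4.
Qed.

Lemma spatial_max {V : normedModType R} (f : V -> R) x v :
  (forall y, differentiable f y) -> differentiable (fun y => derive f y v) x ->
  (forall y, f y <= f x) ->
  derive f x v = 0 /\ derive (fun y => derive f y v) x v <= 0.
Proof.
move=> df ddf fmax; have [h1 h2 h3 h4] := restr_prep f x v df ddf.
have hm : forall s : R, (fun r : R => f (r *: v + x)) s <= (fun r : R => f (r *: v + x)) 0.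
  by move=> s /=; rewrite scale0r add0r; exact: fmax.
have := oneD_max (fun r : R => f (r *: v + x)) h1 h2 hm.
by rewrite h3 h4.
Qed.


Lemma time_min (k : R -> R) t : 0 < t -> derivable k t 1 ->
  (forall s, 0 <= s <= t -> k t <= k s) -> derive1 k t <= 0.
Proof.
move=> t0 dk kmin.
rewrite derive1E ['D_1 k t]cvg_at_leftE; last exact: dk.
apply: limr_le.
  rewrite -(cvg_at_leftE (fun h => h^-1 *: ((k \o shift t) _ - k t))) //.
  apply: cvg_trans dk; apply: cvg_app.
  move=> A [e egt0 Ae]; exists e => // x xe xgt0; apply: Ae => //.
  exact/ltr0_neq0.
near=> h.
have hneg : h < 0 by near: h; exists 1 => /=.
have ht : - t < h.
  near: h; exists t => //= y; rewrite /ball_ /= sub0r normrN => hy y0.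
  by rewrite ltrNl; apply: le_lt_trans hy; rewrite -normrN ler_norm.
rewrite /= [h%:A]mulr1.
apply: mulr_le0_ge0; first by rewrite invr_le0 ltW.
rewrite subr_ge0; apply: kmin; apply/andP; split; lra.
Unshelve. all: by end_near. Qed.

End S.

Section T.
Context {R : realType} {d : nat}.
Local Notation V := ('rV[R]_d).

Definition K0 : set V := [set v : V | forall i, [set` `[(0:R), 1]] (v ord0 i)].

Lemma K0_compact : compact K0.
Proof. apply: (@rV_compact _ _ (fun _ => [set` `[(0:R), 1]])) => i; exact: segment_compact. Qed.

Lemma reduce (y : V) : exists z : 'rV[int]_d, K0 (y - map_mx (fun n : int => n%:~R) z).
Proof.
exists (map_mx (fun r => Num.floor r) y) => i /=.
rewrite !mxE in_itv /= subr_ge0 floor_le /=.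
have := floorD1_gt (y ord0 i); rewrite intrD mulr1z => h. rewrite lerBlDl. lra.
Qed.

Lemma per_red (W : Type) (f : V -> W) : Zd_periodic f -> forall y, exists y', K0 y' /\ f y = f y'.
Proof.
move=> hf y; have [z hz] := reduce y; exists (y - map_mx (fun n : int => n%:~R) z); split => //.
by have := hf (y - map_mx (fun n : int => n%:~R) z) z; rewrite subrK.
Qed.

Lemma derive_coord (f : V -> V) x v (i : 'I_d) : derivable f x v ->
  derivable (fun y => f y ord0 i) x v /\ derive (fun y => f y ord0 i) x v = derive f x v ord0 i.
Proof.
move=> df.
have C : (fun h : R => h^-1 *: (((fun y => f y ord0 i) \o shift x) (h *: v) - f x ord0 i)) @ 0^' --> derive f x v ord0 i.
  rewrite (_ : (fun h : R => _) = (fun M : V => M ord0 i) \o (fun h : R => h^-1 *: ((f \o shift x) (h *: v) - f x))); last first.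
    by apply/funext => h /=; rewrite !mxE.
  apply: continuous_cvg; first exact: coord_continuous.
  exact: df.
split; first by apply/cvg_ex; eexists; exact: C.
exact: cvg_lim C.
Qed.

End T.

Section U.
Context {R : realType}.

Lemma is_derive_expRM (a s : R) :
  is_derive s 1 (fun r => expR (a * r)) (a * expR (a * s)).
Proof.
have df : derivable (fun r : R => a * r) s 1.
  have := @is_deriveZ R R R id a s 1 1 (is_derive_id s 1).
  by move=> [].
have dg : derivable (@expR R) (a * s) 1 by have [] := is_derive_expR (a * s).
have dc : derivable (expR \o (fun r : R => a * r)) s 1.
  apply/derivable1_diffP; apply: differentiable_comp; exact/derivable1_diffP.
apply: DeriveDef; first exact: dc.
rewrite -derive1E (derive1_comp df dg) !derive1E.
have -> : 'D_1 expR (a * s) = expR (a * s) by have [] := is_derive_expR (a * s).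
have -> : 'D_1 (fun r : R => a * r) s = a.
  have := @is_deriveZ R R R id a s 1 1 (is_derive_id s 1).
  by move=> [] _ ->; rewrite /= [a *: 1]mulr1.
by rewrite mulrC.
Qed.


Lemma alg (a phi ut Dx M U : R) : 0 < phi -> phi <= 1 -> a <= phi ->
  `|a| <= U -> `|Dx| <= M -> 0 <= M ->
  -2 * (a * (1 - a)) * Dx <= ut ->
  ut + (2 * M + 1) * phi <= (2 * M * (1 + U) + 1) * (a - phi) -> False.
Proof.
move=> p0 p1 ap aU DM M0 h1 h2.
have U0 : 0 <= U by exact: le_trans (normr_ge0 a) aU.
have L0 : 0 <= (2 * M * (1 + U) + 1) by nra.
have /andP [Dl Du] : - M <= Dx <= M by rewrite -ler_norml.
have [a0|a0] := leP 0 a.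
  have q0 : 0 <= a * (1 - a) by apply: mulr_ge0; lra.
  have q1 : a * (1 - a) <= phi by nra.
  have : a * (1 - a) * Dx <= phi * M.
    apply: (le_trans (ler_wpM2l q0 Du)); exact: ler_wpM2r.
  have : 0 <= (2 * M * (1 + U) + 1) * (phi - a) by apply: mulr_ge0; lra.
  nra.
have aU' : - a <= U by rewrite ltr0_norm in aU.
have q0 : 0 <= - (a * (1 - a)) by nra.
have q1 : - (a * (1 - a)) <= - a * (1 + U) by nra.
have : - (a * (1 - a)) * (- Dx) <= (- a * (1 + U)) * M.
  apply: (le_trans (ler_wpM2l q0 (_ : - Dx <= M))); first lra.
  apply: ler_wpM2r => //.
nra.
Qed.

Section Core.
Context {d : nat}.
Local Notation V := ('rV[R]_d).

Lemma core (u : R -> V -> R) (D : V -> R) (M eps0 T : R) :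
  0 < eps0 -> eps0 <= 1 -> 0 < T -> 0 <= M ->
  (forall x, K0 x -> `|D x| <= M) ->
  (forall t, 0 <= t -> Zd_periodic (u t)) ->
  {within [set p : R * V | 0 <= p.1], continuous (fun p => u p.1 p.2)} ->
  (forall x, eps0 <= u 0 x) ->
  (forall t x, 0 < t -> derivable (fun s => u s x) t 1) ->
  (forall t x, 0 < t -> (forall y, u t x <= u t y) ->
      - 2 * (u t x * (1 - u t x)) * D x <= derive1 (fun s => u s x) t) ->
  forall t x, 0 <= t <= T -> eps0 / 2 * expR (- (2 * M + 1) * T) <= u t x.
Proof.
move=> e0 e1 T0 M0 HD Hper Hc Hinit Hder Hpde.
set C := 2 * M + 1.
set eps := eps0 / 2.
pose phi (s : R) := eps * expR (- C * s).
pose KT : set (R * V) := [set` `[0, T]] `*` K0.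
have KTc : compact KT by apply: compact_setX; [exact: segment_compact | exact: K0_compact].
have KT0 : KT !=set0.
  exists (0, 0); split => /=; first by rewrite in_itv /= lexx ltW.
  by move=> i; rewrite mxE /= in_itv /= lexx ler01.
have KTsub : KT `<=` [set p : R * V | 0 <= p.1].
  by move=> [a b] [] /=; rewrite in_itv /= => /andP [].
have ucont : {within KT, continuous (fun p => u p.1 p.2)}.
  exact: continuous_subspaceW KTsub Hc.
have [cU cUin HU] := @compact_EVT_max _ R (fun p => `|u p.1 p.2|) KT KT0 KTc
  (fun p => continuous_comp (ucont p) (@norm_continuous _ R^o _)).
set U := `|u cU.1 cU.2|.
have HU' : forall p, KT p -> `|u p.1 p.2| <= U by move=> p hp; apply: HU; exact: mem_set.
set lam := 2 * M * (1 + U) + 1.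
pose w (p : R * V) := expR (- lam * p.1) * (u p.1 p.2 - phi p.1).
have cfst : continuous (@fst R V) by move=> p; exact: cvg_fst.
have cexp : forall a : R, continuous (fun p : R * V => expR (a * p.1)).
  move=> a p; apply: (continuous_comp (f := fun p : R * V => a * p.1)); last exact: continuous_expR.
  apply: cvgM; [exact: cvg_cst | exact: cfst].
have cphi : continuous (fun p : R * V => phi p.1).
  move=> p; apply: cvgM; [exact: cvg_cst | exact: cexp].
have wcont : {within KT, continuous w}.
  move=> p; apply: cvgM.
    exact: (continuous_subspaceT (cexp (- lam))).
  apply: cvgB; first exact: ucont.
  exact: (continuous_subspaceT cphi).
have [c cin Hmin] := compact_EVT_min KT0 KTc wcont.
have Hc' : forall p, KT p -> w c <= w p by move=> p hp; apply: Hmin; exact: mem_set.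
have cKT : KT c by rewrite inE in cin.
have eps0' : 0 < eps by rewrite /eps divr_gt0.
have C0 : 0 < C by rewrite /C; lra.
have phi_pos : forall s, 0 < phi s by move=> s; rewrite /phi mulr_gt0 // expR_gt0.
have phi_le : forall s, 0 <= s -> phi s <= eps.
  move=> s s0; rewrite /phi.
  have h : expR (- C * s) <= expR 0 by rewrite ler_expR; nra.
  rewrite expR0 in h.
  by have := ler_wpM2l (ltW eps0') h; rewrite mulr1.
have wpos : 0 < w c.
  rewrite ltNge; apply/negP => wc0.
  case: c cin Hmin Hc' cKT wc0 => ts xs _ _ Hc' [tsI xsK] wc0.
  have /andP [ts0 tsT] : (0 <= ts) && (ts <= T) by move: tsI; rewrite /= in_itv.
  have [ts_e|ts_ne] := eqVneq ts 0.
    move: wc0; rewrite /w /phi /= ts_e !mulr0 expR0 !mul1r mulr1 => wc0.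
    have := Hinit xs; rewrite /eps in wc0 *; lra.
  have ts_pos : 0 < ts by rewrite lt0r ts_ne ts0.
  have xmin : forall y, u ts xs <= u ts y.
    move=> y; have [y' [y'K ->]] := per_red _ _ (Hper ts ts0) y.
    have := Hc' (ts, y') (conj tsI y'K).
    by rewrite /w /= ler_pM2l ?expR_gt0 // lerD2r.
  have hp := Hpde ts xs ts_pos xmin.
  pose k (s : R) := w (s, xs).
  have kmin : forall s, 0 <= s <= ts -> k ts <= k s.
    move=> s /andP [s0 sts]; apply: Hc'; split => //=.
    by rewrite in_itv /= s0 (le_trans sts tsT).
  have dE := is_derive_expRM (- lam) ts.
  have dP := is_derive_expRM (- C) ts.
  have du : is_derive ts 1 (fun s => u s xs) (derive1 (fun s => u s xs) ts).
    by rewrite derive1E; apply: derivableP; exact: Hder.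
  have dphi : is_derive ts 1 phi (eps * (- C * expR (- C * ts))).
    exact: (is_deriveZ eps dP).
  have kd := is_deriveM dE (is_deriveB du dphi).
  have kE : k = (fun r => expR (- lam * r)) * ((fun s => u s xs) - phi) by apply/funext.
  have := @time_min R k ts ts_pos _ kmin.
  case: kd => kder kval.
  rewrite kE derive1E kval.
  move=> /(_ kder).
  have sc : forall a b : R, a *: b = a * b by [].
  rewrite !sc /= => Hk.
  set E := expR (- lam * ts) in Hk.
  have E0 : 0 < E by exact: expR_gt0.
  set ut := derive1 (fun s => u s xs) ts in Hk hp.
  have Hk' : E * (ut + C * phi ts - lam * (u ts xs - phi ts)) <= 0.
    have e : (u^~ xs - phi) ts = u ts xs - phi ts by [].
    move: Hk; rewrite e /phi => H; apply: le_trans H.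
    by rewrite le_eqVlt; apply/orP; left; apply/eqP; ring.
  rewrite pmulr_rle0 // in Hk'.
  have ap : u ts xs <= phi ts.
    by move: wc0; rewrite /w /= pmulr_rle0 ?expR_gt0 // subr_le0.
  have p1 : phi ts <= 1 by apply: le_trans (phi_le ts ts0) _; rewrite /eps; lra.
  apply: (@alg (u ts xs) (phi ts) ut (D xs) M U (phi_pos ts) p1 ap (HU' (ts, xs) (conj tsI xsK)) (HD xs xsK) M0 hp).
  rewrite /C /lam in Hk'; lra.
move=> t x /andP [t0 tT].
have [x' [x'K ->]] := per_red _ _ (Hper t t0) x.
have tI : [set` `[0, T]] t by rewrite /= in_itv /= t0 tT.
have := lt_le_trans wpos (Hc' (t, x') (conj tI x'K)).
rewrite /w /= pmulr_rgt0 ?expR_gt0 // subr_gt0 => H.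
apply: le_trans (ltW H).
rewrite /phi; apply: ler_wpM2l; first exact: ltW.
rewrite ler_expR; nra.
Qed.

End Core.
End U.

Section M.
Context {R : realType} {d : nat}.
Local Notation V := ('rV[R]_d).

Lemma divF_eq (F : V -> V) : (forall x, differentiable F x) ->
  divergence F = fun x => \sum_(i < d) derive F x (e_ i) ord0 i.
Proof.
move=> dF; apply/funext => x; rewrite /divergence; apply: eq_bigr => i _.
have := (derive_coord F x (e_ i) i (diff_derivable (dF x))).2.
have z : (0 : 'I_1) = ord0 by apply/val_inj.
by rewrite z.
Qed.


Lemma divF_cont (F : V -> V) : Ck 1 F -> continuous (divergence F).
Proof.
move=> [dF cF]; rewrite divF_eq //.
have ca : continuous (fun z : R * R => z.1 + z.2) by exact: add_continuous.
apply: (@continuous_big R _ +%R 0 xpredT ca _ (index_enum 'I_d) (fun i x => derive F x (e_ i) ord0 i)) => i _.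
move=> x; exact: (continuous_comp (cF (e_ i) x) (@coord_continuous R 1 d ord0 i _)).
Qed.

End M.

Section M2.
Context {R : realType} {d : nat}.
Local Notation V := ('rV[R]_d).
Lemma pde_expand (f : V -> R) (F : V -> V) x :
  (forall y, differentiable f y) -> (forall y, differentiable F y) ->
  (forall i, derive f x (e_ i) = 0) ->
  divergence (fun y => (f y * (1 - f y)) *: F y) x = f x * (1 - f x) * divergence F x.
Proof.
move=> df dF f0.
rewrite /divergence mulr_sumr; apply: eq_bigr => i _.
have E : (fun y => ((f y * (1 - f y)) *: F y) 0 i) = (f * (cst 1 - f)) * (fun y => F y 0 i).
  by apply/funext => y; rewrite !mxE.
have dfi : derivable f x (e_ i) by exact: diff_derivable.
have d1 : derivable (cst 1 - f) x (e_ i) := derivableB (derivable_cst (1 : R) x (e_ i)) dfi.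
have dFi : derivable (fun y => F y 0 i) x (e_ i).
  have z : (0 : 'I_1) = ord0 by apply/val_inj.
  rewrite z; exact: (derive_coord F x (e_ i) i (diff_derivable (dF x))).1.
rewrite E (deriveM (derivableM dfi d1) dFi).
rewrite (deriveM dfi d1) (deriveB (derivable_cst (1 : R) x (e_ i)) dfi).
by rewrite derive_cst f0 subr0 !scaler0 addr0 scaler0 addr0.
Qed.

Lemma lap_ext (f : V -> R) x (sg : bool) : Ck 2 f ->
  (forall y, if sg then f x <= f y else f y <= f x) ->
  (if sg then 0 <= laplacian f x else laplacian f x <= 0) /\ forall i, derive f x (e_ i) = 0.
Proof.
move=> [df hd] hx.
have ddf : forall v, differentiable (fun y => derive f y v) x by move=> v; have [] := hd v.
case: sg hx => hx.
- split; first by rewrite /laplacian; apply: sumr_ge0 => i _; exact: (spatial_min f x (e_ i) df (ddf _) hx).2.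
  by move=> i; exact: (spatial_min f x (e_ i) df (ddf _) hx).1.
- split; first by rewrite /laplacian; apply: sumr_le0 => i _; exact: (spatial_max f x (e_ i) df (ddf _) hx).2.
  by move=> i; exact: (spatial_max f x (e_ i) df (ddf _) hx).1.
Qed.

End M2.

Theorem lemmaB3 (R : realType) (d : nat) (F : 'rV[R]_d -> 'rV[R]_d)
    (hF : smooth F) (hFper : Zd_periodic F)
    (eps0 : R) (heps0 : 0 < eps0) (T : R) (hT : 0 < T) :
  exists eps1 : R, 0 < eps1 /\
    forall (u0 : 'rV[R]_d -> R), smooth u0 -> Zd_periodic u0 ->
      (forall x, eps0 <= u0 x <= 1 - eps0) ->
      forall u : R -> 'rV[R]_d -> R, is_solution F u0 u ->
        forall t x, 0 <= t <= T -> eps1 <= u t x <= 1 - eps1.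
Proof.
have [dF cF] : Ck 1 F := hF 1%N.
have dc := divF_cont F (hF 1%N).
have K0ne : (@K0 R d) !=set0 by exists 0 => i; rewrite mxE /= in_itv /= lexx ler01.
have [cM cMin HM] := @compact_EVT_max _ R (fun x => `|divergence F x|) K0 K0ne K0_compact
  (continuous_subspaceT (fun x => continuous_comp (dc x) (@norm_continuous _ R^o _))).
set M := `|divergence F cM|.
exists (eps0 / 2 * expR (- (2 * M + 1) * T)); split.
  by apply: mulr_gt0; [rewrite divr_gt0 | exact: expR_gt0].
move=> u0 su0 pu0 hu0 u [Hper Hc Hinit Hreg Hpde] t x tI.
have e1 : eps0 <= 1 by have /andP [] := hu0 0; lra.
have HD : forall x, K0 x -> `|divergence F x| <= M by move=> y hy; apply: HM; exact: mem_set.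
have M0 : 0 <= M by exact: normr_ge0.
have Hder : forall t x, 0 < t -> derivable (fun s => u s x) t 1 by move=> t' x' ht; exact: (Hreg t' ht).2.
have Hdu : forall t y, 0 < t -> differentiable (u t) y by move=> t' y ht; have [[]] := Hreg t' ht.
apply/andP; split.
  apply: (@core R d u (divergence F) M eps0 T heps0 e1 hT M0 HD Hper Hc _ Hder _ t x tI).
    by move=> y; rewrite Hinit; have /andP [] := hu0 y.
  move=> t' x' ht hmin.
  have [hl hg] := lap_ext (u t') x' true (Hreg t' ht).1 hmin.
  rewrite Hpde // pde_expand //; last by move=> y; exact: Hdu.
  set P := u t' x' * (1 - u t' x') in hl *.
  have -> : -2 * P * divergence F x' = - (2 * (P * divergence F x')) by ring.
  set Q := P * divergence F x'.
  lra.
have HD' : forall x, K0 x -> `|(fun y => - divergence F y) x| <= M by move=> y hy; rewrite normrN; exact: HD.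
have Hper' : forall t, 0 <= t -> Zd_periodic (fun y => 1 - u t y).
  by move=> t' ht y z; rewrite /= (Hper t' ht).
have Hc' : {within [set p : R * 'rV[R]_d | 0 <= p.1], continuous (fun p => 1 - u p.1 p.2)}.
  by move=> p; apply: cvgB; [exact: cvg_cst | exact: Hc].
have Hinit' : forall y, eps0 <= 1 - u 0 y.
  by move=> y; rewrite Hinit; have /andP [] := hu0 y; lra.
have Hder' : forall t x, 0 < t -> derivable (fun s => 1 - u s x) t 1.
  by move=> t' x' ht; exact: (derivableB (derivable_cst (1 : R) t' 1) (Hder t' x' ht)).
have := (@core R d (fun t y => 1 - u t y) (fun y => - divergence F y) M eps0 T heps0 e1 hT M0 HD' Hper' Hc' Hinit' Hder' _ t x tI).
  move=> H; rewrite lerBrDl -lerBrDr; apply: H.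
  move=> t' x' ht hmin.
  have hmax : forall y, u t' y <= u t' x' by move=> y; have := hmin y; rewrite lerD2l lerN2.
  have [hl hg] := lap_ext (u t') x' false (Hreg t' ht).1 hmax.
  have E : derive1 (fun s => 1 - u s x') t' = - derive1 (fun s => u s x') t'.
    rewrite !derive1E (_ : (fun s => 1 - u s x') = cst 1 - (fun s => u s x')); last by apply/funext.
    by rewrite (deriveB (derivable_cst (1 : R) t' 1) (Hder t' x' ht)) derive_cst sub0r.
  rewrite E Hpde // pde_expand //; last by move=> y; exact: Hdu.
  set a := u t' x' in hl *.
  have -> : -2 * ((1 - a) * (1 - (1 - a))) * - divergence F x' = 2 * (a * (1 - a) * divergence F x') by ring.
  set Q := a * (1 - a) * divergence F x'.
  lra.
Qed.
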